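(* Let $\phi,\psi$ be Drinfeld modules over $K$ with $n=\operatorname{rk}\phi>\operatorname{rk}\psi$. Identify $\operatorname{Ext}^1_\tau(\phi,\psi)$ with $K^n$ via $(c_0,\dots,c_{n-1})\mapsto$ the class of the biderivation $\delta$ with $\delta(t)=\sum_{i=0}^{n-1}c_i\tau^i$ (this is a bijection). Then $\operatorname{Ext}^1_\tau(\phi,\psi)$ has a natural structure of a $\mathbf t$-module: there is a $\mathbf t$-module $\Pi:\mathbb F_q[t]\to\mathrm{Mat}_n(K\{\tau\})$ such that for every $c\in K^n$, multiplication by $t$ on $\operatorname{Ext}^1_\tau(\phi,\psi)$ sends the class corresponding to $c$ to the class corresponding to $\Pi_t(c)$ (evaluation, $\tau$ acting coordinatewise as $x\mapsto x^q$), and $\Pi_t$ has the block form $$\Pi_t=\begin{bmatrix}\theta&0&\cdots&0\\ \delta_1&&&\\ \vdots&&\Pi^0_t&\\ \delta_{n-1}&&&\end{bmatrix}$$ with $\delta_1,\dots,\delta_{n-1}\in K\{\tau\}$ and $\Pi^0_t\in\mathrm{Mat}_{n-1}(K\{\tau\})$.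
   Context: $A=\mathbb F_q[t]$, $K$ a field of characteristic $p$ with an $\mathbb F_q$-algebra map $\iota:A\to K$, $\theta=\iota(t)$; $K\{\tau\}$ is the ring of twisted polynomials with $\tau x=x^q\tau$. A $\mathbf t$-module of dimension $d$ is an $\mathbb F_q$-algebra homomorphism $\Phi:\mathbb F_q[t]\to\mathrm{Mat}_d(K\{\tau\})$ with $\Phi_t=(\theta I_d+N)+\sum_{i\ge1}M_i\tau^i$, $N$ nilpotent, $M_i\in\mathrm{Mat}_d(K)$; rank $=\deg_\tau\Phi_t$. A Drinfeld module is a $\mathbf t$-module of dimension 1. $\mathrm{Der}(\phi,\psi)$ is the space of $\mathbb F_q$-linear $\delta:\mathbb F_q[t]\to K\{\tau\}$ with $\delta(ab)=\psi_a\delta(b)+\delta(a)\phi_b$ (determined by $\delta(t)$, which can be arbitrary); inner biderivations are $\delta^{(U)}(a)=U\phi_a-\psi_aU$, $U\in K\{\tau\}$. $\operatorname{Ext}^1_\tau(\phi,\psi)$ is identified with $\mathrm{Der}(\phi,\psi)/\mathrm{Der}_{in}(\phi,\psi)$ with $\mathbb F_q[t]$-module structure $a*[\delta]=[\psi_a\delta]$. *)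

(* Defs.v *)
From HB Require Import structures.
From mathcomp Require Import all_boot all_order all_algebra all_field.
Set Implicit Arguments. Unset Strict Implicit. Unset Printing Implicit Defensive.
Import GRing.Theory.
Local Open Scope ring_scope.

(* Twisted polynomials K{tau}: an element sum_i a_i tau^i is stored as the
   polynomial a : {poly K} whose i-th coefficient a`_i is the coefficient of
   tau^i.  Only the additive structure of {poly K} is used; multiplication in
   K{tau} (with tau x = x^q tau) is [tmul q]. *)

Section Twisted.
Variable K : fieldType.
Variable q : nat.

(* (sum a_i tau^i)(sum b_j tau^j) = sum_k (sum_{i<=k} a_i b_{k-i}^(q^i)) tau^k *)
Definition tmul (a b : {poly K}) : {poly K} :=
  \poly_(k < (size a + size b).-1)
     \sum_(i < k.+1) a`_i * (b`_(k - i)) ^+ (q ^ i).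

Definition teval (a : {poly K}) (x : K) : K :=
  \sum_(i < size a) a`_i * x ^+ (q ^ i).

Definition tdeg (a : {poly K}) : nat := (size a).-1.

(* A Drinfeld module (t-module of dimension 1) phi is given by phi_t in K{tau};
   the condition is phi_t = (theta + N) + sum_{i>=1} m_i tau^i with N a
   nilpotent 1x1 matrix over the field K, i.e. N = 0. *)
Definition is_drinfeld (theta : K) (phi_t : {poly K}) : Prop :=
  exists N : K, (exists k, N ^+ k = 0) /\ phi_t`_0 = theta + N.

Definition is_tmodule (d : nat) (theta : K) (Phi_t : 'M[{poly K}]_d) : Prop :=
  exists2 N : 'M[K]_d, (exists k, N ^+ k = 0) &
    (\matrix_(i, j) (Phi_t i j)`_0) = theta%:M + N.

Definition tmx_eval (d : nat) (P : 'M[{poly K}]_d) (c : 'cV[K]_d) : 'cV[K]_d :=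
  \col_i \sum_j teval (P i j) (c j 0).

Definition vec_tpoly (n : nat) (c : 'cV[K]_n) : {poly K} :=
  \sum_(i < n) c i 0 *: 'X^i.

(* Biderivations delta in Der(phi,psi) are identified with delta(t) in K{tau}.
   D = delta(t) is (the value at t of) an inner biderivation iff
   D = U phi_t - psi_t U for some U in K{tau}. *)
Definition inner_bider (phi_t psi_t D : {poly K}) : Prop :=
  exists U : {poly K}, D = tmul U phi_t - tmul psi_t U.

End Twisted.

(* Main.v *)
Require Import Defs.
From HB Require Import structures.
From mathcomp Require Import all_boot all_order all_algebra all_field.
From mathcomp Require Import zify ring.
Import GRing.Theory.
Local Open Scope ring_scope.



Lemma sum_widen0 (V : nmodType) n1 n2 (F : nat -> V) : (n1 <= n2)%N ->
  (forall i, (n1 <= i)%N -> F i = 0) -> \sum_(i < n1) F i = \sum_(i < n2) F i.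
Proof.
move=> le h; rewrite (big_ord_widen n2 F le) big_mkcond /=.
by apply: eq_bigr => i _; case: ifP => // /negbT; rewrite -leqNgt => /h ->.
Qed.

Lemma triangle (V : nmodType) M (G : nat -> nat -> V) :
  \sum_(k < M) \sum_(i < k.+1) G i (k - i)%N = \sum_(i < M) \sum_(j < M - i) G i j.
Proof.
elim: M => [|M IH]; first by rewrite !big_ord0.
rewrite big_ord_recr /= IH [in RHS]big_ord_recr /= subSnn big_ord1 /=.
rewrite [in RHS](eq_bigr (fun i : 'I_M => \sum_(j < M - i) G i j + G i (M - i)%N)); last first.
  by move=> i _; rewrite subSn ?(ltnW (ltn_ord i)) // big_ord_recr.
rewrite big_split /= -addrA; congr (_ + _).
by rewrite big_ord_recr /= subnn.
Qed.

Section Aux.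
Context {K : fieldType}.
Context {q : nat}.
Hypothesis frobD : forall x y : K, (x + y) ^+ q = x ^+ q + y ^+ q.

Lemma frD i (x y : K) : (x + y) ^+ (q ^ i) = x ^+ (q ^ i) + y ^+ (q ^ i).
Proof.
elim: i => [|i IH]; first by rewrite !expn0 !expr1.
by rewrite expnSr !exprM IH frobD.
Qed.

Lemma fr0 i : (0 : K) ^+ (q ^ i) = 0.
Proof.
have : (0:K) ^+ (q ^ i) + 0 = 0 ^+ (q ^ i) + 0 ^+ (q ^ i) by rewrite addr0 -frD addr0.
by move/addrI => <-.
Qed.

Lemma frN i (x : K) : (- x) ^+ (q ^ i) = - x ^+ (q ^ i).
Proof. by apply/eqP; rewrite -subr_eq0 opprK -frD addNr fr0. Qed.

Lemma fr_sum i I r (P : pred I) (F : I -> K) :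
  (\sum_(j <- r | P j) F j) ^+ (q ^ i) = \sum_(j <- r | P j) (F j) ^+ (q ^ i).
Proof. exact: (big_morph (fun x => x ^+ (q ^ i)) (frD i) (fr0 i)). Qed.

Lemma coef_tmul (a b : {poly K}) k :
  (tmul q a b)`_k = \sum_(i < k.+1) a`_i * (b`_(k - i)) ^+ (q ^ i).
Proof.
rewrite coef_poly; case: ltnP => // hk; symmetry; apply: big1 => i _.
have := ltn_ord i; have [hi|hi] := ltnP i (size a) => hik.
  rewrite [b`_ _]nth_default ?fr0 ?mulr0 //. move: hk hi hik; rewrite -subn1; move: (nat_of_ord i) (size a) (size b) => j sa sb. lia.
by rewrite nth_default ?mul0r.
Qed.

Lemma tmulDl (a1 a2 b : {poly K}) : tmul q (a1 + a2) b = tmul q a1 b + tmul q a2 b.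
Proof.
apply/polyP => k; rewrite coefD !coef_tmul -big_split /=.
by apply: eq_bigr => i _; rewrite coefD mulrDl.
Qed.

Lemma tmulDr (a b1 b2 : {poly K}) : tmul q a (b1 + b2) = tmul q a b1 + tmul q a b2.
Proof.
apply/polyP => k; rewrite coefD !coef_tmul -big_split /=.
by apply: eq_bigr => i _; rewrite coefD frD mulrDr.
Qed.

Lemma tmulNl (a b : {poly K}) : tmul q (- a) b = - tmul q a b.
Proof.
apply/polyP => k; rewrite coefN !coef_tmul -sumrN.
by apply: eq_bigr => i _; rewrite coefN mulNr.
Qed.

Lemma tmulNr (a b : {poly K}) : tmul q a (- b) = - tmul q a b.
Proof.
apply/polyP => k; rewrite coefN !coef_tmul -sumrN.
by apply: eq_bigr => i _; rewrite coefN frN mulrN.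
Qed.

Lemma tmul0l (b : {poly K}) : tmul q 0 b = 0.
Proof. by apply/polyP => k; rewrite coef0 coef_tmul big1 // => i _; rewrite coef0 mul0r. Qed.

Lemma tmul0r (a : {poly K}) : tmul q a 0 = 0.
Proof. by apply/polyP => k; rewrite coef0 coef_tmul big1 // => i _; rewrite coef0 fr0 mulr0. Qed.

Lemma tmul_sumr (a : {poly K}) I r (P : pred I) (F : I -> {poly K}) :
  tmul q a (\sum_(j <- r | P j) F j) = \sum_(j <- r | P j) tmul q a (F j).
Proof. exact: (big_morph (tmul q a) (tmulDr a) (tmul0r a)). Qed.

Lemma tmul_coef0 (a b : {poly K}) : (tmul q a b)`_0 = a`_0 * b`_0.
Proof. by rewrite coef_tmul big_ord1 /= expn0 expr1. Qed.

Lemma teval_widen (a : {poly K}) (x : K) m : (size a <= m)%N ->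
  teval q a x = \sum_(i < m) a`_i * x ^+ (q ^ i).
Proof. by move=> h; rewrite /teval (@sum_widen0 _ _ _ (fun i => a`_i * x ^+ (q ^ i)) h) // => i hi; rewrite nth_default ?mul0r. Qed.

Lemma tevalD (a1 a2 : {poly K}) (x : K) : teval q (a1 + a2) x = teval q a1 x + teval q a2 x.
Proof.
set m := maxn (size a1) (size a2).
rewrite !(teval_widen _ _ m) ?leq_maxl ?leq_maxr ?(leq_trans (size_add _ _)) //.
by rewrite -big_split; apply: eq_bigr => i _; rewrite coefD mulrDl.
Qed.

Lemma teval0 (x : K) : teval q 0 x = 0.
Proof. by rewrite /teval size_poly0 big_ord0. Qed.

Lemma teval_sum (x : K) I r (P : pred I) (F : I -> {poly K}) :
  teval q (\sum_(j <- r | P j) F j) x = \sum_(j <- r | P j) teval q (F j) x.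
Proof. exact: (big_morph (fun a => teval q a x) (fun a b => tevalD a b x) (teval0 x)). Qed.

Lemma tevalXn (c : K) j (x : K) : teval q (c *: 'X^j) x = c * x ^+ (q ^ j).
Proof.
rewrite (teval_widen _ _ j.+1) ?(leq_trans (size_scale_leq _ _)) ?size_polyXn //.
rewrite big_ord_recr /= big1 ?add0r; last first.
  by move=> i _; rewrite coefZ coefXn (ltn_eqF (ltn_ord i)) mulr0 mul0r.
by rewrite coefZ coefXn eqxx mulr1.
Qed.

Lemma teval1 (x : K) : teval q 1 x = x.
Proof.
have -> : (1 : {poly K}) = 1 *: 'X^0 by rewrite expr0 scale1r.
by rewrite tevalXn mul1r expn0 expr1.
Qed.

Lemma teval_tmul (a b : {poly K}) (x : K) : teval q (tmul q a b) x = teval q a (teval q b x).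
Proof.
set M := (size a + size b)%N.
rewrite (teval_widen _ _ M); last by apply: leq_trans (size_poly _ _) _; exact: leq_pred.
rewrite (teval_widen a _ M) ?leq_addr //.
pose G i j := a`_i * (b`_j) ^+ (q ^ i) * x ^+ (q ^ (i + j)).
transitivity (\sum_(k < M) \sum_(i < k.+1) G i (k - i)%N).
  apply: eq_bigr => k _; rewrite coef_tmul mulr_suml; apply: eq_bigr => i _.
  by rewrite /G subnKC // -ltnS.
rewrite triangle; apply: eq_bigr => i _.
rewrite /teval fr_sum mulr_sumr.
rewrite (eq_bigr (fun j : 'I_(size b) => G i j)); last first.
  by move=> j _; rewrite /G exprMn -exprM -expnD [(j + i)%N]addnC mulrA.
have [hi|hi] := ltnP i (size a).
  symmetry; apply: (@sum_widen0 _ _ _ (G i)); first by rewrite /M; move: (nat_of_ord i) hi => i0 hi0; lia.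
  by move=> j hj; rewrite /G [b`_j]nth_default ?fr0 ?mulr0 ?mul0r.
rewrite big1; last by move=> j _; rewrite /G nth_default ?mul0r.
by rewrite big1 // => j _; rewrite /G nth_default ?mul0r.
Qed.

End Aux.



Ltac gen_size := repeat match goal with
 | H : context [@size ?T ?p] |- _ => revert H
 end; repeat match goal with |- context [@size ?T ?p] => generalize (@size T p) end; intros.
Ltac slia := gen_size; lia.

Section Main.
Context {K : fieldType}.
Context {q : nat}.
Hypothesis frobD : forall x y : K, (x + y) ^+ q = x ^+ q + y ^+ q.
Variables (theta : K) (a b : {poly K}) (n : nat).
Hypotheses (Ha0 : a`_0 = theta) (Hb0 : b`_0 = theta) (Hsa : size a = n.+1)
  (Hsb : (size b <= n)%N) (Hn : (0 < n)%N).

Lemma coefd (p : {poly K}) i : (size p <= i)%N -> p`_i = 0.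
Proof. exact: nth_default. Qed.

Local Notation L U := (tmul q U a - tmul q b U).
Local Notation inner := (inner_bider q a b).
Local Notation an := (a`_n).

Lemma an_neq0 : an != 0.
Proof.
have : lead_coef a != 0 by rewrite lead_coef_eq0 -size_poly_eq0 Hsa.
by rewrite /lead_coef Hsa.
Qed.

Lemma innerL U : inner (L U).
Proof. by exists U. Qed.

Lemma inner0 : inner 0.
Proof. by exists 0; rewrite (tmul0l frobD) (tmul0r frobD) subr0. Qed.

Lemma innerD D1 D2 : inner D1 -> inner D2 -> inner (D1 + D2).
Proof.
case=> U ->; case=> V ->; exists (U + V).
by rewrite (tmulDl frobD) (tmulDr frobD) opprD addrACA.
Qed.

Lemma innerN D : inner D -> inner (- D).
Proof.
case=> U ->; exists (- U).
by rewrite (tmulNl frobD) (tmulNr frobD) opprD !opprK.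
Qed.

Lemma innerB D1 D2 : inner D1 -> inner D2 -> inner (D1 - D2).
Proof. by move=> h1 h2; apply: innerD _ _ h1 (innerN _ h2). Qed.

Lemma inner_sum I r (P : pred I) (F : I -> {poly K}) :
  (forall i, P i -> inner (F i)) -> inner (\sum_(i <- r | P i) F i).
Proof.
move=> h; elim: r => [|x r IH]; first by rewrite big_nil; exact: inner0.
by rewrite big_cons; case: ifP => // hx; apply: innerD _ _ (h _ hx) IH.
Qed.

Lemma L_coef0 U : (L U)`_0 = 0.
Proof. by rewrite coefB !(tmul_coef0 frobD) Ha0 Hb0 mulrC subrr. Qed.

Lemma inner_coef0 D : inner D -> D`_0 = 0.
Proof. by case=> U ->; exact: L_coef0. Qed.

Lemma L_top (U : {poly K}) m : (size U <= m.+1)%N -> (L U)`_(m + n) = U`_m * an ^+ (q ^ m).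
Proof.
move=> hU; rewrite coefB !(coef_tmul frobD).
have hm : (m < (m + n).+1)%N by slia.
rewrite (bigD1 (Ordinal hm)) //= addKn big1 ?addr0; last first.
  move=> i; rewrite -val_eqE /= => hi.
  have := ltn_ord i; move: (nat_of_ord i) hi => j hj hjn.
  have [lt|gt] := ltnP j m.
    by rewrite [a`_ _]coefd ?(fr0 frobD) ?mulr0 // Hsa; slia.
  rewrite coefd ?mul0r //. slia.
rewrite [X in _ - X]big1 ?subr0 // => i _.
have := ltn_ord i; move: (nat_of_ord i) => j hjn.
have [lt|ge] := ltnP j n.
  by rewrite [U`_ _]coefd ?(fr0 frobD) ?mulr0 //; slia.
by rewrite coefd ?mul0r //; slia.
Qed.

Lemma L_high (U : {poly K}) m k : (size U <= m.+1)%N -> (m + n < k)%N -> (L U)`_k = 0.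
Proof.
move=> hU hk; rewrite coefB !(coef_tmul frobD) !big1 ?subrr // => i _;
  have := ltn_ord i; move: (nat_of_ord i) => j hjn.
  have [lt|ge] := ltnP j n.
    by rewrite [U`_ _]coefd ?(fr0 frobD) ?mulr0 //; slia.
  by rewrite coefd ?mul0r //; slia.
have [lt|ge] := ltnP m j.
  by rewrite coefd ?mul0r //; slia.
by rewrite [a`_ _]coefd ?(fr0 frobD) ?mulr0 // Hsa; slia.
Qed.

Lemma L_small (U : {poly K}) : (size (L U) <= n)%N -> L U = 0.
Proof.
move=> h; have [->|U0] := eqVneq U 0; first by rewrite (tmul0l frobD) (tmul0r frobD) subr0.
set m := (size U).-1.
have hU : size U = m.+1 by rewrite prednK // size_poly_gt0.
have := L_top U m (eq_leq hU); rewrite coefd; last by apply: leq_trans h _; slia.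
move/esym/eqP; rewrite mulf_eq0 expf_eq0 (negbTE an_neq0) andbF orbF.
have : lead_coef U != 0 by rewrite lead_coef_eq0.
by rewrite /lead_coef -/m => /negbTE ->.
Qed.

Local Notation vec := (@vec_tpoly K n).

Lemma vec_coef (c : 'cV[K]_n) (i : 'I_n) : (vec c)`_i = c i 0.
Proof.
rewrite /vec_tpoly coef_sum (bigD1 i) //= coefZ coefXn eqxx mulr1 big1 ?addr0 //.
move=> j hj; rewrite coefZ coefXn; case: eqP => [/val_inj e|]; last by rewrite mulr0.
by rewrite e eqxx in hj.
Qed.

Lemma vec_coef_high (c : 'cV[K]_n) k : (n <= k)%N -> (vec c)`_k = 0.
Proof.
move=> h; rewrite /vec_tpoly coef_sum big1 // => j _.
by rewrite coefZ coefXn gtn_eqF ?mulr0 // (leq_trans (ltn_ord j) h).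
Qed.

Lemma size_vec (c : 'cV[K]_n) : (size (vec c) <= n)%N.
Proof. by apply/leq_sizeP => k; exact: vec_coef_high. Qed.

Lemma vec_col_sum I r (P : pred I) (f : I -> 'I_n -> K) :
  vec (\col_l \sum_(t <- r | P t) f t l) = \sum_(t <- r | P t) vec (\col_l f t l).
Proof.
rewrite /vec_tpoly exchange_big /=; apply: eq_bigr => i _.
by rewrite mxE scaler_suml; apply: eq_bigr => t _; rewrite mxE.
Qed.

Lemma poly_expand (P : {poly K}) N : (size P <= N)%N ->
  P = \sum_(t < N) P`_t *: 'X^t.
Proof.
move=> h; rewrite -{1}[P]coefK poly_def.
by apply: (@sum_widen0 _ _ _ (fun t => P`_t *: 'X^t)) => // i hi; rewrite coefd ?scale0r.
Qed.

Lemma ext_base (D : {poly K}) : (size D <= n)%N -> D - vec (\col_i D`_i) = 0.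
Proof.
move=> h; apply/polyP => k; rewrite coefB coef0.
have [hk|hk] := ltnP k n.
  by rewrite -[k]/(nat_of_ord (Ordinal hk)) vec_coef mxE subrr.
by rewrite vec_coef_high // coefd ?subr0 //; apply: leq_trans h hk.
Qed.

Lemma ext_exists N (D : {poly K}) : (size D <= N)%N -> exists c : 'cV[K]_n, inner (D - vec c).
Proof.
elim: N D => [|N IH] D hD.
  by exists (\col_i D`_i); rewrite ext_base; [exact: inner0 | exact: leq_trans hD (leq0n n)].
have [h|h] := leqP N.+1 n.
  by exists (\col_i D`_i); rewrite ext_base; [exact: inner0 | exact: leq_trans hD h].
set m := (N - n)%N.
set u := D`_N / an ^+ (q ^ m).
set U := u *: 'X^m.
have hU : (size U <= m.+1)%N.
  by apply: leq_trans (size_scale_leq _ _) _; rewrite size_polyXn.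
have hD' : (size (D - L U)%R <= N)%N.
  apply/leq_sizeP => k hk; rewrite coefB.
  have [e|ne] := eqVneq k N.
    have -> : k = (m + n)%N by rewrite e /m; slia.
    rewrite L_top // /U coefZ coefXn eqxx mulr1 /u divfK ?expf_neq0 ?an_neq0 //.
    by rewrite /m subnK ?subrr //; slia.
  rewrite coefd; last by apply: leq_trans hD _; slia.
  by rewrite (L_high U m k hU) ?subrr //; rewrite /m; slia.
have [c hc] := IH _ hD'; exists c.
have -> : D - vec c = (D - L U - vec c) + L U by rewrite addrAC subrK.
exact: innerD _ _ hc (innerL U).
Qed.

Lemma ext_unique (D : {poly K}) (c1 c2 : 'cV[K]_n) :
  inner (D - vec c1) -> inner (D - vec c2) -> c1 = c2.
Proof.
move=> h1 h2; have := innerB _ _ h2 h1.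
have -> : (D - vec c2) - (D - vec c1) = vec c1 - vec c2.
  by rewrite opprB addrC addrA subrK.
case=> U hU.
have h0 : vec c1 - vec c2 = 0.
  rewrite hU L_small // -hU; apply/leq_sizeP => k hk.
  by rewrite coefB !vec_coef_high ?subrr.
apply/matrixP => i j; rewrite [j]ord1.
by apply/eqP; rewrite -subr_eq0 -!vec_coef -coefB h0 coef0.
Qed.


Definition e (t : nat) (l : 'I_n) : {poly K} := if (l : nat) == t then 1 else 0.
Definition good (k : nat) (Q : 'I_n -> {poly K}) :=
  forall x : K, inner (x *: 'X^k - vec (\col_l teval q (Q l) x)).

Lemma vec_single (t : nat) (ht : (t < n)%N) (x : K) :
  vec (\col_l (if (l : nat) == t then x else 0)) = x *: 'X^t.
Proof.
rewrite /vec_tpoly (bigD1 (Ordinal ht)) //= mxE eqxx big1 ?addr0 // => l hl.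
rewrite mxE; case: eqP => [e|]; last by rewrite scale0r.
by move: hl; rewrite -val_eqE /= e eqxx.
Qed.

Lemma good_small k : (k < n)%N -> good k (e k).
Proof.
move=> hk x.
have -> : \col_l teval q (e k l) x = \col_l (if (l : nat) == k then x else 0).
  by apply/matrixP => l j; rewrite !mxE /e; case: eqP => _; rewrite ?teval1 ?teval0.
by rewrite vec_single // subrr; exact: inner0.
Qed.

Lemma coef_tmul_Xl (u : K) m (P : {poly K}) t :
  (tmul q (u *: 'X^m) P)`_t = if (m <= t)%N then u * P`_(t - m) ^+ (q ^ m) else 0.
Proof.
rewrite (coef_tmul frobD); case: ifP => h.
  have hm : (m < t.+1)%N by rewrite ltnS.
  rewrite (bigD1 (Ordinal hm)) //= coefZ coefXn eqxx mulr1 big1 ?addr0 // => i hi.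
  rewrite coefZ coefXn; case: eqP => [e|]; last by rewrite mulr0 mul0r.
  by move: hi; rewrite -val_eqE /= e eqxx.
rewrite big1 // => i _; rewrite coefZ coefXn.
case: eqP => [e|]; last by rewrite mulr0 mul0r.
exfalso; have := ltn_ord i; move: (nat_of_ord i) e => j e hj.
by move/negbT: h; rewrite -ltnNge; slia.
Qed.

Lemma coef_tmul_Xr (u : K) m (P : {poly K}) t :
  (tmul q P (u *: 'X^m))`_t = if (m <= t)%N then P`_(t - m) * u ^+ (q ^ (t - m)) else 0.
Proof.
rewrite (coef_tmul frobD); case: ifP => h.
  have hm : (t - m < t.+1)%N by slia.
  rewrite (bigD1 (Ordinal hm)) //= coefZ coefXn subKn // eqxx mulr1 big1 ?addr0 // => i hi.
  rewrite coefZ coefXn; case: eqP => [e|]; last by rewrite mulr0 (fr0 frobD) mulr0.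
  exfalso; move: hi; rewrite -val_eqE /=; have := ltn_ord i.
  by move: (nat_of_ord i) e => j e hj /eqP; slia.
rewrite big1 // => i _; rewrite coefZ coefXn.
case: eqP => [e|]; last by rewrite mulr0 (fr0 frobD) mulr0.
exfalso; have := ltn_ord i; move: (nat_of_ord i) e => j e hj.
by move/negbT: h; rewrite -ltnNge; slia.
Qed.

Definition w k : K := (an ^+ (q ^ (k - n)))^-1.
Definition R k t : {poly K} :=
  if (k - n <= t)%N then (- (w k * a`_(t - (k - n)) ^+ (q ^ (k - n)))) *: 'X^0
       + (b`_(t - (k - n)) * w k ^+ (q ^ (t - (k - n)))) *: 'X^(t - (k - n)) else 0.

Lemma good_step k (F : nat -> 'I_n -> {poly K}) : (n <= k)%N ->
  (forall t, (t < k)%N -> good t (F t)) ->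
  good k (fun l => \sum_(t < k) tmul q (F t l) (R k t)).
Proof.
move=> hk hF x; rewrite /=.
set m := (k - n)%N.
set u := x * w k.
set U := u *: 'X^m.
have hU : (size U <= m.+1)%N.
  by apply: leq_trans (size_scale_leq _ _) _; rewrite size_polyXn.
set P := x *: 'X^k - L U.
have hP : (size P <= k)%N.
  apply/leq_sizeP => j hj; rewrite /P coefB coefZ coefXn.
  have [e|ne] := eqVneq j k.
    rewrite e mulr1.
    have -> : k = (m + n)%N by rewrite /m subnK.
    rewrite L_top // /U coefZ coefXn eqxx mulr1 /u /w -/m mulfVK ?subrr //.
    by rewrite expf_neq0 // an_neq0.
  rewrite mulr0 sub0r (L_high U m j hU) ?oppr0 //; rewrite /m; slia.
have Pc : forall t, (t < k)%N -> P`_t = teval q (R k t) x.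
  move=> t ht; rewrite /P coefB coefZ coefXn (ltn_eqF ht) mulr0 sub0r coefB.
  rewrite /U coef_tmul_Xl coef_tmul_Xr /R -/m.
  case: ifP => hmt; last by rewrite teval0 subrr oppr0.
  rewrite tevalD !tevalXn expn0 expr1 /u exprMn; ring.
have Pd : P = \sum_(t < k) teval q (R k t) x *: 'X^t.
  rewrite {1}(poly_expand _ _ hP); apply: eq_bigr => t _; by rewrite Pc.
have -> : \col_l teval q (\sum_(t < k) tmul q (F t l) (R k t)) x =
    \col_l \sum_(t < k) teval q (F t l) (teval q (R k t) x).
  apply/matrixP => l j; rewrite !mxE teval_sum; apply: eq_bigr => t _.
  by rewrite (teval_tmul frobD).
rewrite vec_col_sum.
have -> : x *: 'X^k = L U + P by rewrite /P addrC subrK.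
rewrite Pd -addrA -sumrB; apply: (innerD _ _ (innerL U)).
by apply: inner_sum => t _; exact: hF.
Qed.

Lemma all_good K0 : exists F : nat -> 'I_n -> {poly K}, forall k, (k < K0)%N -> good k (F k).
Proof.
elim: K0 => [|K0 [F hF]]; first by exists (fun _ _ => 0).
pose Q := if (K0 < n)%N then e K0 else (fun l => \sum_(t < K0) tmul q (F t l) (R K0 t)).
exists (fun t => if t == K0 then Q else F t) => k hk.
case: eqP => [->|ne]; last by apply: hF; slia.
rewrite /Q; case: ifP => h; first exact: good_small.
by apply: good_step; [rewrite leqNgt h | exact: hF].
Qed.

Definition S i t : {poly K} := if (i <= t)%N then b`_(t - i) *: 'X^(t - i) else 0.

Lemma S_coef0 i t : (S i t)`_0 = if t == i then theta else 0.
Proof.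
rewrite /S; case: ifP => h.
  rewrite coefZ coefXn; case: eqP => [e0|ne].
    have -> : t = i by slia.
    by rewrite subnn Hb0 eqxx mulr1.
  case: eqP => [e1|ne1]; last by rewrite mulr0.
  by exfalso; apply: ne; rewrite e1 subnn.
rewrite coef0; case: eqP => [e1|//].
by move: h; rewrite e1 leqnn.
Qed.

Lemma teval_C (c x : K) : teval q (c%:P) x = c * x.
Proof.
have -> : c%:P = c *: 'X^0 by rewrite expr0 alg_polyC.
by rewrite tevalXn expn0 expr1.
Qed.

Lemma psi_vec_expand (c : 'cV[K]_n) :
  tmul q b (vec c) = \sum_(i < n) \sum_(t < n + n) teval q (S i t) (c i 0) *: 'X^t.
Proof.
rewrite /vec_tpoly (tmul_sumr frobD); apply: eq_bigr => i _.
set P := tmul q b _.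
have hP : (size P <= n + n)%N.
  apply/leq_sizeP => j hj; rewrite /P coef_tmul_Xr; case: ifP => // h.
  by rewrite coefd ?mul0r //; have := ltn_ord i; slia.
rewrite {1}(poly_expand _ _ hP); apply: eq_bigr => t _.
by rewrite /P coef_tmul_Xr /S; case: ifP => h; rewrite ?tevalXn ?teval0.
Qed.

Definition Pi0 (G : nat -> 'I_n -> {poly K}) : 'M[{poly K}]_n :=
  \matrix_(l, i) \sum_(t < n + n) tmul q (G t l) (S i t).

Lemma Pi0_eval G : (forall t, (t < n + n)%N -> good t (G t)) ->
  forall c, inner (tmul q b (vec c) - vec (tmx_eval q (Pi0 G) c)).
Proof.
move=> hG c.
have -> : tmx_eval q (Pi0 G) c =
    \col_l \sum_(i < n) \sum_(t < n + n) teval q (G t l) (teval q (S i t) (c i 0)).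
  apply/matrixP => l j; rewrite !mxE; apply: eq_bigr => i _.
  rewrite mxE teval_sum; apply: eq_bigr => t _; by rewrite (teval_tmul frobD).
rewrite vec_col_sum psi_vec_expand -sumrB; apply: inner_sum => i _.
rewrite vec_col_sum -sumrB; apply: inner_sum => t _; exact: hG.
Qed.

Lemma part2 : exists Pi_t : 'M[{poly K}]_n,
  is_tmodule theta Pi_t /\
  (forall c, inner (tmul q b (vec c) - vec (tmx_eval q Pi_t c))) /\
  (forall i j : 'I_n, nat_of_ord i = 0%N ->
     Pi_t i j = (if nat_of_ord j == 0%N then theta%:P else 0)).
Proof.
have [F hF] := all_good (n + n).
pose G t := if (t < n)%N then e t else F t.
have hG : forall t, (t < n + n)%N -> good t (G t).
  move=> t ht; rewrite /G; case: ifP => h; [exact: good_small | exact: hF].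
pose Pi := \matrix_(l, i) if (l : nat) == 0%N then (if (i : nat) == 0%N then theta%:P else 0)
                        else Pi0 G l i.
pose i0 : 'I_n := Ordinal Hn.
have hev : forall c, tmx_eval q Pi c = tmx_eval q (Pi0 G) c.
  move=> c; apply/matrixP => l j; rewrite [j]ord1 [LHS]mxE.
  have [hl|hl] := eqVneq (l : nat) 0%N; last first.
    by rewrite mxE; apply: eq_bigr => i _; rewrite mxE (negbTE hl).
  have -> : l = i0 by apply: val_inj.
  rewrite (bigD1 i0) //= mxE /= teval_C big1 ?addr0; last first.
    move=> i hi; rewrite mxE /=.
    case: eqP => [e0|]; last by rewrite teval0.
    by exfalso; move: hi; rewrite -val_eqE /= e0 eqxx.
  have h0 := inner_coef0 _ (Pi0_eval _ hG c).
  rewrite coefB (tmul_coef0 frobD) Hb0 in h0.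
  have := vec_coef c i0; have := vec_coef (tmx_eval q (Pi0 G) c) i0; rewrite /= => e1 e2.
  by rewrite e1 e2 in h0; apply/eqP; rewrite -subr_eq0 h0.
exists Pi; split; [|split].
- exists 0; first by exists 1%N; rewrite expr1.
  rewrite addr0; apply/matrixP => l i; rewrite !mxE.
  have [hl|hl] := eqVneq (l : nat) 0%N.
    have -> : l = i0 by apply: val_inj.
    rewrite /=; case: eqP => [e0|ne].
      have -> : i = i0 by apply: val_inj; exact: e0.
      by rewrite coefC eqxx mulr1n.
    rewrite coef0; case: eqP => [e1|]; last by rewrite mulr0n.
    by exfalso; apply: ne; rewrite -e1.
  rewrite coef_sum (bigD1 (Ordinal (leq_trans (ltn_ord i) (leq_addr n n)))) //=.
  rewrite (tmul_coef0 frobD) S_coef0 eqxx /G ltn_ord /e.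
  rewrite big1 ?addr0; last first.
    move=> t ht; rewrite (tmul_coef0 frobD) S_coef0.
    case: eqP => [e0|]; last by rewrite mulr0.
    by exfalso; move: ht; rewrite -val_eqE /= e0 eqxx.
  case: eqP => [e0|ne].
    have -> : l = i by apply: val_inj; exact: e0.
    by rewrite coef1 eqxx mul1r mulr1n.
  rewrite coef0 mul0r; case: eqP => [e1|]; last by rewrite mulr0n.
  by exfalso; apply: ne; rewrite e1.
- by move=> c; rewrite hev; exact: Pi0_eval _ hG c.
- by move=> i j hi; rewrite mxE hi eqxx.
Qed.

End Main.


Lemma nilp0 (K : fieldType) (N : K) k : N ^+ k = 0 -> N = 0.
Proof. by move/eqP; rewrite expf_eq0 => /andP [_ /eqP]. Qed.

Lemma frob_card (Fq : finFieldType) (K : fieldType) (iota0 : {rmorphism Fq -> K}) :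
  forall x y : K, (x + y) ^+ #|Fq| = x ^+ #|Fq| + y ^+ #|Fq|.
Proof.
have [p pr pFq] := @finPcharP Fq.
have pK : p \in [pchar K] := rmorph_pchar iota0 pFq.
have hcard : #|Fq| = (p ^ logn p #|Fq|)%N := card_pprimeChar pFq.
move=> x y; apply: exprDn_pchar.
by rewrite (eq_pnat _ (pcharf_eq pK)) hcard pnatX pnat_id.
Qed.

Theorem proposition5p1
  (Fq : finFieldType) (K : fieldType) (iota0 : {rmorphism Fq -> K})
  (theta : K) (phi_t psi_t : {poly K}) :
  is_drinfeld theta phi_t -> is_drinfeld theta psi_t ->
  (tdeg psi_t < tdeg phi_t)%N ->
  (* the identification K^n -> Ext^1(phi,psi) is a bijection *)
  (forall D : {poly K}, exists! c : 'cV[K]_(tdeg phi_t),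
      inner_bider #|Fq| phi_t psi_t (D - vec_tpoly c)) /\
  (* Ext^1 carries a t-module structure Pi with the required block form *)
  (exists Pi_t : 'M[{poly K}]_(tdeg phi_t),
      is_tmodule theta Pi_t /\
      (forall c : 'cV[K]_(tdeg phi_t),
         inner_bider #|Fq| phi_t psi_t
           (tmul #|Fq| psi_t (vec_tpoly c)
            - vec_tpoly (tmx_eval #|Fq| Pi_t c))) /\
      (forall i j : 'I_(tdeg phi_t), nat_of_ord i = 0%N ->
         Pi_t i j = (if nat_of_ord j == 0%N then theta%:P else 0))).
Proof.
move=> [N1 [[k1 hk1] h1]] [N2 [[k2 hk2] h2]] hdeg.
have frobD := frob_card _ _ iota0.
have Ha0 : phi_t`_0 = theta by rewrite h1 (nilp0 _ _ _ hk1) addr0.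
have Hb0 : psi_t`_0 = theta by rewrite h2 (nilp0 _ _ _ hk2) addr0.
have Hn : (0 < tdeg phi_t)%N by apply: leq_ltn_trans (leq0n _) hdeg.
have Hsa : size phi_t = (tdeg phi_t).+1.
  by move: Hn; rewrite /tdeg; case: (size phi_t).
have Hsb : (size psi_t <= tdeg phi_t)%N.
  by move: hdeg; rewrite {1}/tdeg; case: (size psi_t).
split.
  move=> D.
  have [c hc] := ext_exists frobD _ _ _ Hsa Hsb Hn _ _ (leqnn (size D)).
  exists c; split => // c' hc'.
  exact: ext_unique frobD _ _ _ Hsa Hsb Hn _ _ _ hc hc'.
exact: part2 frobD _ _ _ _ Ha0 Hb0 Hsa Hsb Hn.
Qed.
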